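(* Let $\{|k\rangle\}_{k=1}^n$ be an orthonormal basis of $\mathbb{C}^n$ and let $$\tilde{\mathcal{L}}(\rho)=-i[H,\rho]+\sum_a\Big(M^a\rho M^{a\dagger}-\tfrac12\{M^{a\dagger}M^a,\rho\}\Big)$$ be a Lindblad generator, with $H$ self-adjoint and $M^a$ arbitrary $n\times n$ matrices (finitely many). Suppose $\tilde{\mathcal{L}}(|i\rangle\langle i|)=0$ for every $i$. Then $H$ and all $M^a$ are diagonal in the basis $\{|k\rangle\}$; writing $M^a=\sum_k n^a_k|k\rangle\langle k|$ and $H=\sum_k h_k|k\rangle\langle k|$, one has for all $i\neq j$ $$\tilde{\mathcal{L}}(|i\rangle\langle j|)=-D_{ij}\,|i\rangle\langle j|,\qquad D_{ij}=\tfrac12\sum_a\big(|n^a_i|^2+|n^a_j|^2-2n^a_i\bar n^a_j\big)+i(h_i-h_j).$$ In particular, a Lindblad generator that couples only phases to phases does not mix distinct phases.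
   Context: For a density matrix $\rho$, the off-diagonal entries $\langle i|\rho|j\rangle$, $i\neq j$, are called phases and the diagonal entries probabilities. *)

(* Defs.v *)
From HB Require Import structures.
From mathcomp Require Import all_boot all_order all_algebra all_field.
Set Implicit Arguments. Unset Strict Implicit. Unset Printing Implicit Defensive.
Import Order.TTheory GRing.Theory Num.Theory.
Local Open Scope ring_scope.

Definition adjmx (m p : nat) (A : 'M[algC]_(m, p)) : 'M[algC]_(p, m) :=
  (map_mx (fun z : algC => z^*) A)^T.

(* The orthonormal basis {|k>} is given by the columns of U, with
   adjmx U *m U = 1 (orthonormality of the columns). *)
Definition ket (n : nat) (U : 'M[algC]_n) (k : 'I_n) : 'cV[algC]_n := col k U.
Definition bra (n : nat) (U : 'M[algC]_n) (k : 'I_n) : 'rV[algC]_n := adjmx (ket U k).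

Definition ketbra (n : nat) (U : 'M[algC]_n) (i j : 'I_n) : 'M[algC]_n :=
  ket U i *m bra U j.

Definition lindblad (n : nat) (H : 'M[algC]_n) (Ms : seq 'M[algC]_n)
  (rho : 'M[algC]_n) : 'M[algC]_n :=
  - ('i *: (H *m rho - rho *m H))
  + \sum_(M <- Ms)
      (M *m rho *m adjmx M
       - (1/2 : algC) *: (adjmx M *m M *m rho + rho *m (adjmx M *m M))).

Definition mxel (n : nat) (U : 'M[algC]_n) (A : 'M[algC]_n) (k l : 'I_n) : algC :=
  (bra U k *m A *m ket U l) 0 0.

Definition dcoef (n : nat) (U : 'M[algC]_n) (A : 'M[algC]_n) (k : 'I_n) : algC :=
  mxel U A k k.

Definition Dcoef (n : nat) (U : 'M[algC]_n) (H : 'M[algC]_n) (Ms : seq 'M[algC]_n)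
  (i j : 'I_n) : algC :=
  (1/2 : algC) * \sum_(M <- Ms)
     (`|dcoef U M i| ^+ 2 + `|dcoef U M j| ^+ 2
      - 2 * dcoef U M i * (dcoef U M j)^*)
  + 'i * (dcoef U H i - dcoef U H j).

(* Main.v *)
Require Import Defs.
From HB Require Import structures.
From mathcomp Require Import all_boot all_order all_algebra all_field.
From mathcomp Require Import ring.
Import Order.TTheory GRing.Theory Num.Theory.
Local Open Scope ring_scope.


Section S.
Set Implicit Arguments. Unset Strict Implicit.
Variable n : nat.
Implicit Types A B : 'M[algC]_n.

Lemma adjmxE m p (A : 'M[algC]_(m,p)) i j : adjmx A i j = (A j i)^*.
Proof. by rewrite /adjmx !mxE. Qed.

Lemma adjmxM m p q (A : 'M[algC]_(m,p)) (B : 'M[algC]_(p,q)) : adjmx (A *m B) = adjmx B *m adjmx A.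
Proof.
apply/matrixP => i j; rewrite adjmxE !mxE rmorph_sum; apply: eq_bigr => k _.
by rewrite !adjmxE rmorphM mulrC.
Qed.

Lemma adjmxK m p (A : 'M[algC]_(m,p)) : adjmx (adjmx A) = A.
Proof. by apply/matrixP => i j; rewrite !adjmxE conjCK. Qed.

Lemma adjmxD A B : adjmx (A + B) = adjmx A + adjmx B.
Proof. by apply/matrixP => i j; rewrite /adjmx !mxE rmorphD. Qed.

Lemma adjmx1 : adjmx (1%:M : 'M[algC]_n) = 1%:M.
Proof. by apply/matrixP => i j; rewrite /adjmx !mxE rmorph_nat eq_sym. Qed.

Lemma adj_delta m p (i : 'I_m) (j : 'I_p) : adjmx (delta_mx i j) = delta_mx j i.
Proof. by apply/matrixP => a b; rewrite /adjmx !mxE rmorph_nat andbC. Qed.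

Variable U : 'M[algC]_n.
Hypothesis hU : adjmx U *m U = 1%:M.

Lemma hU' : U *m adjmx U = 1%:M.
Proof. exact: mulmx1C. Qed.

Definition phi A := adjmx U *m A *m U.

Lemma phiM A B : phi (A *m B) = phi A *m phi B.
Proof.
by rewrite /phi !mulmxA -[adjmx U *m A *m U *m adjmx U]mulmxA hU' mulmx1.
Qed.

Lemma phiD A B : phi (A + B) = phi A + phi B.
Proof. by rewrite /phi mulmxDr mulmxDl. Qed.

Lemma phiN A : phi (- A) = - phi A.
Proof. by rewrite /phi mulmxN mulNmx. Qed.

Lemma phiB A B : phi (A - B) = phi A - phi B.
Proof. by rewrite phiD phiN. Qed.

Lemma phiZ c A : phi (c *: A) = c *: phi A.
Proof. by rewrite /phi -scalemxAr -scalemxAl. Qed.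

Lemma phi0 : phi 0 = 0.
Proof. by rewrite /phi mulmx0 mul0mx. Qed.

Lemma phi_sum (I : Type) (r : seq I) (F : I -> 'M[algC]_n) :
  phi (\sum_(x <- r) F x) = \sum_(x <- r) phi (F x).
Proof.
elim: r => [|x r IH]; first by rewrite !big_nil phi0.
by rewrite !big_cons phiD IH.
Qed.

Lemma phi_adj A : phi (adjmx A) = adjmx (phi A).
Proof. by rewrite /phi !adjmxM adjmxK mulmxA. Qed.

Lemma phi_inj A B : phi A = phi B -> A = B.
Proof.
move=> e.
have: U *m phi A *m adjmx U = U *m phi B *m adjmx U by rewrite e.
rewrite /phi !mulmxA hU' mul1mx -!mulmxA hU' !mulmx1.
by rewrite mul1mx.
Qed.

Lemma phi_ketbra i j : phi (ketbra U i j) = delta_mx i j.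
Proof.
rewrite /phi /ketbra /bra /ket !colE adjmxM adj_delta.
by rewrite !mulmxA hU mul1mx -mulmxA hU mulmx1 mul_delta_mx.
Qed.

Lemma mxelE A k l : mxel U A k l = phi A k l.
Proof.
rewrite /mxel /bra /ket /phi !colE adjmxM adj_delta !mulmxA.
rewrite -rowE -colE !mxE; apply: eq_bigr => j _; by rewrite -row_mul mxE.
Qed.

Lemma dcoefE A k : dcoef U A k = phi A k k.
Proof. exact: mxelE. Qed.

Lemma phi_lind H Ms rho :
  phi (lindblad H Ms rho) = lindblad (phi H) (map phi Ms) (phi rho).
Proof.
rewrite /lindblad phiD phiN phiZ phiB !phiM phi_sum big_map; congr (_ + _).
by apply: eq_bigr => M _; rewrite phiB phiZ phiD !phiM phi_adj.
Qed.

End S.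



Lemma mxBE m p (X Y : 'M[algC]_(m,p)) a b : (X - Y) a b = X a b - Y a b.
Proof. by rewrite !mxE. Qed.
Lemma mxDE m p (X Y : 'M[algC]_(m,p)) a b : (X + Y) a b = X a b + Y a b.
Proof. by rewrite !mxE. Qed.
Lemma mxZE m p c (X : 'M[algC]_(m,p)) a b : (c *: X) a b = c * X a b.
Proof. by rewrite !mxE. Qed.
Lemma mx0E m p a b : (0 : 'M[algC]_(m,p)) a b = 0.
Proof. by rewrite !mxE. Qed.
Lemma mxNE m p (X : 'M[algC]_(m,p)) a b : (- X) a b = - X a b.
Proof. by rewrite !mxE. Qed.

Section T.
Set Implicit Arguments. Unset Strict Implicit.
Variable n : nat.
Implicit Types A B : 'M[algC]_n.

Lemma mul_delta_r A (i j k l : 'I_n) : (A *m delta_mx i j) k l = A k i * (l == j)%:R.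
Proof.
rewrite mxE (bigD1 i) //= !mxE eqxx /= big1 ?addr0 // => p /negPf pi.
by rewrite mxE pi mulr0.
Qed.

Lemma mul_delta_l A (i j k l : 'I_n) : (delta_mx i j *m A) k l = (k == i)%:R * A j l.
Proof.
rewrite mxE (bigD1 j) //= !mxE eqxx andbT big1 ?addr0 // => p /negPf pj.
by rewrite mxE pj andbF mul0r.
Qed.

Lemma mul_delta_lr A B (i j k l : 'I_n) : (A *m delta_mx i j *m B) k l = A k i * B j l.
Proof.
rewrite mxE (bigD1 j) //= mul_delta_r eqxx mulr1 big1 ?addr0 // => p /negPf pj.
by rewrite mul_delta_r pj mulr0 mul0r.
Qed.

Lemma lind_entry h ms (i j k l : 'I_n) :
  lindblad h ms (delta_mx i j) k l =
  - ('i * (h k i * (l == j)%:R - (k == i)%:R * h j l))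
  + \sum_(M <- ms) (M k i * (M l j)^*
      - 1/2 * ((adjmx M *m M) k i * (l == j)%:R + (k == i)%:R * (adjmx M *m M) j l)).
Proof.
rewrite /lindblad !mxE summxE; congr (- (_ * (_ - _)) + _).
- by rewrite -mul_delta_r mxE.
- by rewrite -mul_delta_l mxE.
apply: eq_bigr => M _.
rewrite mxBE mxZE mxDE mul_delta_lr adjmxE mul_delta_r mul_delta_l.
done.
Qed.

End T.



Section T2.
Set Implicit Arguments. Unset Strict Implicit.
Variable n : nat.
Implicit Types A B : 'M[algC]_n.

Definition isdiag A := forall a b : 'I_n, a != b -> A a b = 0.

Lemma diag_mulr A (i j : 'I_n) : isdiag A -> A *m delta_mx i j = A i i *: delta_mx i j.
Proof.
move=> hd; apply/matrixP => a b; rewrite mxE (bigD1 i) //= big1 ?addr0.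
  rewrite !mxE eqxx /=; case: (eqVneq a i) => [->|ne]; first by [].
  by rewrite hd // mul0r /= mulr0.
by move=> p /negPf pi; rewrite mxE pi mulr0.
Qed.

Lemma diag_mull A (i j : 'I_n) : isdiag A -> delta_mx i j *m A = A j j *: delta_mx i j.
Proof.
move=> hd; apply/matrixP => a b; rewrite mxE (bigD1 j) //= big1 ?addr0.
  rewrite !mxE eqxx andbT; case: (eqVneq b j) => [->|ne]; first by rewrite andbT mulrC.
  by rewrite hd 1?eq_sym // mulr0 andbF mulr0.
by move=> p /negPf pj; rewrite mxE pj andbF mul0r.
Qed.

Lemma diag_adj A : isdiag A -> isdiag (adjmx A).
Proof. by move=> hd a b ab; rewrite adjmxE hd 1?eq_sym // conjC0. Qed.

Lemma diag_sum A : isdiag A -> A = \sum_(k < n) A k k *: delta_mx k k.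
Proof.
move=> hd; apply/matrixP => a b; rewrite summxE (bigD1 a) //= big1 ?addr0.
  rewrite !mxE eqxx /=; case: (eqVneq a b) => [->|ne]; first by rewrite mulr1.
  by rewrite hd // mulr0.
by move=> p /negPf pa; rewrite !mxE eq_sym pa mulr0.
Qed.

Lemma psum_seq (I : eqType) (r : seq I) (F : I -> algC) :
  (forall x, 0 <= F x) -> \sum_(x <- r) F x = 0 -> forall x, x \in r -> F x = 0.
Proof.
move=> F0; elim: r => [|y r IH] //= e x; rewrite big_cons in e.
move/eqP: e; rewrite paddr_eq0 ?sumr_ge0 // => /andP[/eqP e1 /eqP e2].
by rewrite in_cons => /orP[/eqP -> // | xr]; apply: IH.
Qed.

Lemma lind_diag h ms (i j : 'I_n) : isdiag h -> (forall M, M \in ms -> isdiag M) ->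
  lindblad h ms (delta_mx i j) =
  (- ('i * (h i i - h j j)) + \sum_(M <- ms) (M i i * (M j j)^*
       - 1/2 * (M i i * (M i i)^* + (M j j)^* * M j j))) *: delta_mx i j.
Proof.
move=> hh hM; rewrite /lindblad scalerDl scaler_suml big_seq [in RHS]big_seq.
congr (_ + _).
  by rewrite diag_mulr // diag_mull // -scalerBl scalerA scaleNr.
apply: eq_bigr => M /hM dM.
have dA := diag_adj dM.
rewrite diag_mulr // -mulmxA diag_mulr // -scalemxAl diag_mull // -scalemxAr diag_mulr //.
rewrite mulmxA diag_mull // -scalemxAl diag_mull // !adjmxE !scalerA -scalerDl scalerA -scalerBl.
done.
Qed.

End T2.

Theorem mainTheorem3 (n : nat) (U : 'M[algC]_n) (H : 'M[algC]_n)
  (Ms : seq 'M[algC]_n)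
  (hU : adjmx U *m U = 1%:M)
  (hH : adjmx H = H)
  (hstat : forall i : 'I_n, lindblad H Ms (ketbra U i i) = 0) :
  (H = \sum_(k < n) dcoef U H k *: ketbra U k k)
  /\ (forall M, M \in Ms -> M = \sum_(k < n) dcoef U M k *: ketbra U k k)
  /\ (forall i j : 'I_n, i != j ->
        lindblad H Ms (ketbra U i j) = - Dcoef U H Ms i j *: ketbra U i j).
Proof.
pose h := phi U H. pose ms := map (phi U) Ms.
have hst : forall i, lindblad h ms (delta_mx i i) = 0.
  by move=> i; rewrite -(phi_ketbra hU) -(phi_lind hU) (hstat i) phi0.
have hM : forall M, M \in ms -> isdiag M.
  move=> M HM k i ki.
  have := congr1 (fun X : 'M[algC]_n => X k k) (hst i); rewrite /= lind_entry (negPf ki) mx0E.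
  rewrite mulr0 mul0r subrr mulr0 oppr0 add0r.
  under eq_bigr do rewrite mulr0 mul0r addr0 mulr0 subr0.
  move=> e; apply/eqP; rewrite -mul_conjC_eq0; apply/eqP.
  exact: (psum_seq (fun x : 'M_n => mul_conjC_ge0 (x k i)) e HM).
have hh : isdiag h.
  move=> k i ki.
  have := congr1 (fun X : 'M[algC]_n => X k i) (hst i); rewrite /= lind_entry (negPf ki) eqxx mx0E.
  rewrite big_seq big1 ?addr0.
    rewrite mulr1 mul0r subr0 => /eqP; rewrite oppr_eq0 mulf_eq0 (negPf (neq0Ci _)) /=.
    by move/eqP.
  move=> M /hM dM; rewrite (dM k i ki) mul0r.
  have -> : (adjmx M *m M) k i = 0.
    rewrite mxE big1 // => p _; rewrite adjmxE.
    case: (eqVneq p i) => [->|pi]; last by rewrite (dM p i pi) mulr0.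
    by rewrite (dM i k) 1?eq_sym // conjC0 mul0r.
  by rewrite mul0r (_ : false%:R = 0 :> algC) // mul0r addr0 mulr0 subrr.
split.
  apply: (phi_inj hU); rewrite phi_sum.
  under eq_bigr do rewrite phiZ (phi_ketbra hU) dcoefE.
  exact: diag_sum.
split.
  move=> M HM; apply: (phi_inj hU); rewrite phi_sum.
  under eq_bigr do rewrite phiZ (phi_ketbra hU) dcoefE.
  by apply: diag_sum; apply: hM; rewrite map_f.
move=> i j _; apply: (phi_inj hU).
rewrite (phi_lind hU) phiZ !(phi_ketbra hU) lind_diag //; congr (_ *: _).
rewrite /Dcoef big_map.
under [in RHS]eq_bigr do rewrite !dcoefE.
rewrite !dcoefE opprD [LHS]addrC mulr_sumr -sumrN; congr (_ + _).
apply: eq_bigr => M _; rewrite !normCK; field.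
by [].
Qed.
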